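(* Let $E$ be a Banach space over $\mathbb{K}$, $m,k\in\mathbb{N}$ with $k>1$, and suppose that there exists a surjective polynomial $R\in\mathcal{P}(^{mk}E;\ell_1)$. Then there exists a weak*-weak*-continuous operator $T\in\mathcal{L}(\mathcal{P}(^k\ell_1);\mathcal{P}(^{mk}E))$ such that $T\neq\Delta^1_kP$ for every $P\in\mathcal{P}(^mE;\ell_1)$.
   Context: Banach spaces are over $\mathbb{K}=\mathbb{R}$ or $\mathbb{C}$. $\mathcal{P}(^jX;Y)$ is the space of continuous $j$-homogeneous polynomials $X\to Y$, $\mathcal{P}(^jX)=\mathcal{P}(^jX;\mathbb{K})$, $\mathcal{L}(X;Y)$ the bounded linear operators. For $P\in\mathcal{P}(^mE;F)$, $\Delta^1_kP\colon\mathcal{P}(^kF)\to\mathcal{P}(^{mk}E)$ is $\Delta^1_kP(q)=q\circ P$. For a Banach space $X$ and $j\in\mathbb{N}$, $\widehat{\otimes}^{j,s}_\pi X$ is the completed $j$-fold symmetric projective tensor product, and for $q\in\mathcal{P}(^jX)$, $q_L\in(\widehat{\otimes}^{j,s}_\pi X)^*$ is the linearization with $q_L(x\otimes\cdots\otimes x)=q(x)$; $q\mapsto q_L$ is a topological isomorphism $\mathcal{P}(^jX)\to(\widehat{\otimes}^{j,s}_\pi X)^*$. The weak* topology on $\mathcal{P}(^jX)$ is the one induced via this isomorphism by the weak* topology of $(\widehat{\otimes}^{j,s}_\pi X)^*$. *)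

(* Defs.v *)
From HB Require Import structures.
From mathcomp Require Import all_boot all_order all_algebra.
From mathcomp Require Import all_classical all_reals all_analysis.
From mathcomp Require Import complex.
Set Implicit Arguments. Unset Strict Implicit. Unset Printing Implicit Defensive.
Import Order.TTheory GRing.Theory Num.Theory numFieldNormedType.Exports.
Local Open Scope ring_scope.

(* The scalar field: K = R (b = true) or K = C = R[i] (b = false). *)
Definition scalarK (R : realType) (b : bool) : numFieldType :=
  if b then (R : numFieldType) else ((R[i])%C : numFieldType).

Section Generic.
Variable K : numFieldType.

(* "||x||_1 <= c", i.e. sum_n |x n| <= c (all partial sums are <= c). *)
Definition l1_le (x : nat -> K) (c : K) : Prop :=
  forall N : nat, \sum_(n < N) `|x n| <= c.

Definition l1_pred : {pred (nat -> K^o)} := fun x => `[< exists c, l1_le x c >].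

Lemma l1_subproof : GRing.subsemimod_closed l1_pred.
Proof.
split; [split|].
- apply/asboolP; exists 0 => N; rewrite big1 // => i _; by rewrite normr0.
- move=> u v /asboolP[cu Hu] /asboolP[cv Hv]; apply/asboolP; exists (cu + cv) => N.
  apply: (le_trans _ (lerD (Hu N) (Hv N))); rewrite -big_split /=.
  by apply: ler_sum => i _; exact: ler_normD.
- move=> a u /asboolP[cu Hu]; apply/asboolP; exists (`|a| * cu) => N.
  have -> : \sum_(n < N) `|(a *: u) n| = `|a| * \sum_(n < N) `|u n|.
    rewrite mulr_sumr; apply: eq_bigr => i _.
    by rewrite /GRing.scale /= normrM.
  by apply: ler_wpM2l => //; exact: Hu.
Qed.

HB.instance Definition _ := GRing.isSubmodClosed.Build K (nat -> K^o) l1_pred l1_subproof.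

Record l1 := L1 { l1val : nat -> K^o; l1valP : l1val \in l1_pred }.
HB.instance Definition _ := [isSub for l1val].
HB.instance Definition _ := [Choice of l1 by <:].
HB.instance Definition _ := [SubChoice_isSubLmodule of l1 by <:].

Definition l1_norm_le (x : l1) (c : K) : Prop := l1_le (l1val x) c.

Definition norm_le (V : normedModType K) (x : V) (c : K) : Prop := `|x| <= c.
Definition scal_norm_le (x : K^o) (c : K) : Prop := `|(x : K)| <= c.

(* Continuous j-homogeneous polynomials between normed spaces, where a  *)
(* normed space is given by its "norm is at most" relation nle.        *)

Definition update (V : Type) (j : nat) (xs : 'I_j -> V) (i : 'I_j) (u : V) : 'I_j -> V :=
  fun l => if l == i then u else xs l.

Definition multilinear (V W : lmodType K) (j : nat) (A : ('I_j -> V) -> W) : Prop :=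
  forall (xs : 'I_j -> V) (i : 'I_j) (a : K) (u v : V),
    A (update xs i (a *: u + v)) = a *: A (update xs i u) + A (update xs i v).

Definition norm_continuous (V W : lmodType K) (nV : V -> K -> Prop) (nW : W -> K -> Prop)
    (f : V -> W) : Prop :=
  forall (x : V) (e : K), 0 < e -> exists2 d : K, 0 < d &
    forall y : V, nV (y - x) d -> nW (f y - f x) e.

Definition is_hpoly (V W : lmodType K) (nV : V -> K -> Prop) (nW : W -> K -> Prop)
    (j : nat) (f : V -> W) : Prop :=
  (exists A : ('I_j -> V) -> W, multilinear A /\ forall x : V, f x = A (fun _ => x))
  /\ norm_continuous nV nW f.

Definition is_spoly (V : lmodType K) (nV : V -> K -> Prop) (j : nat) (q : V -> K^o) : Prop :=
  is_hpoly nV scal_norm_le j q.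

(* The weak* topology of P(^j V) = ((symmetric projective tensor        *)
(* product of V, completed))^*. An element of the completed j-fold      *)
(* symmetric projective tensor product is sum_n lam_n x_n (x) ... (x) x_n *)
(* with sum_n |lam_n| ||x_n||^j < oo, and it acts on q \in P(^j V) by  *)
(* q_L(sum_n lam_n x_n^{(x)j}) = sum_n lam_n q(x_n).                     *)

Definition tensor_admissible (V : lmodType K) (nV : V -> K -> Prop) (j : nat)
    (lam : nat -> K) (xs : nat -> V) : Prop :=
  exists c : nat -> K, (forall n, nV (xs n) (c n)) /\
    exists B : K, forall N : nat, \sum_(n < N) `|lam n| * c n ^+ j <= B.

Definition tensor_eval (V : lmodType K) (lam : nat -> K) (xs : nat -> V) (q : V -> K^o) : K :=
  limn (series (fun n => lam n * q (xs n))).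

(* T : P(^j V) -> P(^i W) is weak*-weak* continuous: continuity (at every
   point q0 of P(^j V)) for the initial topologies generated by the
   functionals tensor_eval, i.e. for each sub-basic neighbourhood of T q0
   there is a basic neighbourhood of q0 mapped into it. *)
Definition wstar_wstar_continuous (V W : lmodType K) (nV : V -> K -> Prop)
    (nW : W -> K -> Prop) (j i : nat) (T : (V -> K^o) -> (W -> K^o)) : Prop :=
  forall q0 : V -> K^o, is_spoly nV j q0 ->
  forall (lam : nat -> K) (ys : nat -> W), tensor_admissible nW i lam ys ->
  forall e : K, 0 < e ->
  exists (r : nat) (lams : 'I_r -> nat -> K) (xss : 'I_r -> nat -> V),
    (forall l, tensor_admissible nV j (lams l) (xss l)) /\
    exists2 d : K, 0 < d &
      forall q : V -> K^o, is_spoly nV j q ->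
        (forall l, `|tensor_eval (lams l) (xss l) q - tensor_eval (lams l) (xss l) q0| < d) ->
        `|tensor_eval lam ys (T q) - tensor_eval lam ys (T q0)| < e.

Definition bounded_linear_op (V W : lmodType K) (nV : V -> K -> Prop)
    (nW : W -> K -> Prop) (j i : nat) (T : (V -> K^o) -> (W -> K^o)) : Prop :=
  (forall q, is_spoly nV j q -> is_spoly nW i (T q)) /\
  (forall (a : K) q1 q2, is_spoly nV j q1 -> is_spoly nV j q2 ->
     T (a *: q1 + q2) = a *: T q1 + T q2) /\
  (exists C : K, forall q, is_spoly nV j q -> forall c : K,
     (forall x, nV x 1 -> `|q x| <= c) -> forall y, nW y 1 -> `|T q y| <= C * c).

End Generic.

(* Main.v *)
Require Import Defs.
From HB Require Import structures.
From mathcomp Require Import all_boot all_order all_algebra.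
From mathcomp Require Import all_classical all_reals all_analysis.
From mathcomp Require Import complex.
Import Order.TTheory GRing.Theory Num.Theory numFieldNormedType.Exports.
Local Open Scope ring_scope.
From mathcomp Require Import ring lra zify.
Local Open Scope classical_set_scope.

Lemma limn_ncvg (K : numFieldType) (u : nat -> K^o) : ~ cvg (u @ \oo) -> limn u = 0.
Proof.
move=> h. rewrite /lim /lim_in. rewrite xgetPN //.
move=> x hx; apply h. by apply/cvg_ex; exists x.
Qed.

Lemma limn_scale (K : numFieldType) (u v : nat -> K^o) (c : K) :
  (forall n, v n = c * u n) -> limn v = c * limn u.
Proof.
move=> h; have -> : v = (fun n => c * u n) by apply/funext.
have [->|c0] := eqVneq c 0.
  rewrite mul0r; under eq_fun do rewrite mul0r. exact: norm_lim_cst.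
have [cu|ncu] := pselect (cvg (u @ \oo)).
  apply: cvg_lim => //; exact: cvgMl_tmp.
rewrite (@limn_ncvg _ _ ncu) mulr0; apply: limn_ncvg => hc; apply: ncu.
have -> : u = (fun n => c^-1 * (c * u n)).
  by apply/funext => n; rewrite mulrA mulVf // mul1r.
by apply/cvg_ex; eexists; apply: cvgMl_tmp; exact: hc.
Qed.

Lemma limn_delta (K : numFieldType) (a : K) :
  limn (series (fun n : nat => ((n == 0)%N%:R * a : K^o))) = a.
Proof.
apply: norm_lim_near_cst; exists 1%N => // N /= hN.
rewrite /series /=. case: N hN => // N _.
rewrite big_nat_recl //= mul1r big1_seq ?addr0 // => i _ /=. by rewrite mul0r.
Qed.

Section Gen.
Variable K : numFieldType.

Lemma minpos (a b : K) : 0 < a -> 0 < b ->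
  [/\ 0 < Order.min a b, Order.min a b <= a & Order.min a b <= b].
Proof.
move=> ha hb; have ab : (a >=< b)%O := real_comparable (gtr0_real ha) (gtr0_real hb).
split; first by rewrite comparable_lt_min // ha hb.
  by rewrite comparable_ge_min // lexx.
by rewrite comparable_ge_min // lexx orbT.
Qed.

Lemma cont_mul (V : lmodType K) (nV : V -> K -> Prop)
  (mono : forall v c c', c <= c' -> nV v c -> nV v c')
  (f g : V -> K^o) :
  Defs.norm_continuous nV (@scal_norm_le K) f -> Defs.norm_continuous nV (@scal_norm_le K) g ->
  Defs.norm_continuous nV (@scal_norm_le K) (fun x => f x * g x).
Proof.
move=> cf cg x e e0.
set Gx := `|g x| + 1; set Fx := `|f x| + 1.
have Gx0 : 0 < Gx by rewrite /Gx ltr_pwDr.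
have Fx0 : 0 < Fx by rewrite /Fx ltr_pwDr.
have [df df0 hf] := cf x (e / (2 * Gx)) (divr_gt0 e0 (mulr_gt0 (ltr0Sn K 1) Gx0)).
have [pm pm1 pm2] := @minpos _ _ ltr01 (divr_gt0 e0 (mulr_gt0 (ltr0Sn K 1) Fx0)).
have [dg dg0 hg] := cg x _ pm.
have [dd dd1 dd2] := @minpos _ _ df0 dg0.
exists (Order.min df dg) => // y hy.
have /hf hfy : nV (y - x) df by apply: mono hy.
have /hg hgy : nV (y - x) dg by apply: mono hy.
rewrite /scal_norm_le in hfy hgy *.
have -> : f y * g y - f x * g x = (f y - f x) * g y + f x * (g y - g x) by ring.
apply: (le_trans (ler_normD _ _)); rewrite !normrM.
have hgy1 : `|g y - g x| <= 1 by apply: (le_trans hgy).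
have hgy2 : `|g y - g x| <= e / (2 * Fx) by apply: (le_trans hgy).
have hgyb : `|g y| <= Gx.
  have -> : g y = (g y - g x) + g x by ring.
  by apply: (le_trans (ler_normD _ _)); rewrite /Gx addrC lerD2l.
have h1 : `|f y - f x| * `|g y| <= e / (2 * Gx) * Gx by apply: ler_pM.
have h2 : `|f x| * `|g y - g x| <= Fx * (e / (2 * Fx)).
  by apply: ler_pM => //; rewrite /Fx lerDl.
apply: (le_trans (lerD h1 h2)).
have -> : e / (2 * Gx) * Gx + Fx * (e / (2 * Fx)) = e.
  field. by rewrite !gt_eqF.
done.
Qed.

Lemma cont_cst (V : lmodType K) (nV : V -> K -> Prop) (c : K) :
  Defs.norm_continuous nV (@scal_norm_le K) (fun _ : V => (c : K^o)).
Proof.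
move=> x e e0; exists 1 => // y _; rewrite /scal_norm_le subrr normr0; exact: ltW.
Qed.

Lemma cont_prod (V : lmodType K) (nV : V -> K -> Prop)
  (mono : forall v c c', c <= c' -> nV v c -> nV v c') (n : nat)
  (F : 'I_n -> V -> K^o) :
  (forall i, Defs.norm_continuous nV (@scal_norm_le K) (F i)) ->
  Defs.norm_continuous nV (@scal_norm_le K) (fun x => (\prod_(i < n) F i x : K)).
Proof.
elim: n F => [|n IH] F hF.
  have -> : (fun x => (\prod_(i < 0) F i x : K^o)) = (fun _ => (1 : K^o)).
    by apply/funext => x; rewrite big_ord0.
  exact: cont_cst.
have -> : (fun x => (\prod_(i < n.+1) F i x : K^o)) =
   (fun x => (\prod_(i < n) F (widen_ord (leqnSn n) i) x : K^o) * F ord_max x).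
  by apply/funext => x; rewrite big_ord_recr.
apply: cont_mul => //; exact: IH.
Qed.

Lemma l1_mono : forall (v : l1 K) (c c' : K), c <= c' -> l1_norm_le v c -> l1_norm_le v c'.
Proof. by move=> v c c' h hv N; apply: le_trans (hv N) h. Qed.

Lemma coord_le (u : nat -> K^o) c j : l1_le u c -> `|u j| <= c.
Proof.
move=> /(_ j.+1); apply: le_trans; rewrite big_ord_recr /= lerDr.
by apply: sumr_ge0 => i _.
Qed.

Lemma coord_cont j : Defs.norm_continuous (@l1_norm_le K) (@scal_norm_le K)
   (fun y : l1 K => (l1val y j : K^o)).
Proof.
move=> x e e0; exists e => // y hy; rewrite /scal_norm_le.
exact: (coord_le _ _ j hy).
Qed.

Lemma delta_sum (i N : nat) : \sum_(n < N) `|(((n : nat) == i)%:R : K)| = ((i < N)%N)%:R.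
Proof.
elim: N => [|N IH]; first by rewrite big_ord0.
rewrite big_ord_recr /= IH.
have [->|ne] := eqVneq N i.
  by rewrite ltnn ltnSn normr1 add0r.
rewrite normr0 addr0; congr (_%:R).
move/eqP: ne => ne; congr nat_of_bool; apply/idP/idP => h; lia.
Qed.

Lemma delta_le (i : nat) : l1_le (fun n => ((n == i)%:R : K)) 1.
Proof. by move=> N; rewrite delta_sum; case: (i < N)%N; rewrite ?ler01 ?lexx. Qed.

Lemma ev_in (i : nat) : (fun n => ((n == i)%:R : K^o)) \in @l1_pred K.
Proof. by apply/asboolP; exists 1; exact: delta_le. Qed.

Definition ev (i : nat) : l1 K := L1 (ev_in i).

Definition qf (k : nat) (f : 'I_k -> nat) (y : l1 K) : K^o :=
  \prod_(i < k) l1val y (f i).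

Lemma qf_spoly k (f : 'I_k -> nat) : is_spoly (@l1_norm_le K) k (qf k f).
Proof.
split.
  exists (fun ys : 'I_k -> l1 K => (\prod_(i < k) l1val (ys i) (f i) : K^o)); split => //.
  move=> ys j a u v.
  rewrite (bigD1 j) //= (bigD1 j (P := predT)) //= (bigD1 j (P := predT)) //=.
  rewrite /update !eqxx.
  have E w : \prod_(i < k | i != j) l1val (if i == j then w else ys i) (f i)
           = \prod_(i < k | i != j) l1val (ys i) (f i).
    by apply: eq_bigr => i /negbTE ->.
  rewrite !E /GRing.scale /=.
  have -> : (a *: l1val u + l1val v) (f j) = a * l1val u (f j) + l1val v (f j) by [].
  ring.
apply: cont_prod; first exact: l1_mono.
move=> i; exact: coord_cont.
Qed.
End Gen.

Section ESide.
Variable K : numFieldType.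
Variable E : normedModType K.

Lemma norm_mono : forall (v : E) (c c' : K), c <= c' -> norm_le v c -> norm_le v c'.
Proof. by move=> v c c' h hv; apply: le_trans hv h. Qed.

Lemma sc_upd (d : K) n (xs : 'I_n -> E) j (w : E) :
  (fun i => d *: update xs j w i) = update (fun i => d *: xs i) j (d *: w).
Proof. by apply/funext => i; rewrite /update; case: (i == j). Qed.

Lemma gprops (n : nat) (Rp : E -> l1 K) :
  is_hpoly (@norm_le _ E) (@l1_norm_le _) n Rp ->
  (forall y : l1 K, exists x : E, Rp x = y) ->
  exists g : E -> K^o, is_spoly (@norm_le _ E) n g /\
    (exists M, forall x, norm_le x 1 -> `|g x| <= M) /\ exists x0, g x0 = 1.
Proof.
move=> [[A [Aml AE]] Rc] sR.
have [d d0 hd] := Rc 0 1 ltr01.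
exists (fun x => (l1val (Rp (d *: x)) 0 : K^o)); split; [split|split].
- exists (fun xs => (l1val (A (fun i => d *: xs i)) 0 : K^o)); split.
    move=> xs j a u v; rewrite !sc_upd.
    have -> : d *: (a *: u + v) = a *: (d *: u) + d *: v.
      by rewrite scalerDr !scalerA mulrC.
    by rewrite Aml.
  by move=> x; rewrite AE.
- move=> x e e0; have [dd dd0 h] := Rc (d *: x) e e0.
  exists (dd / d); first by rewrite divr_gt0.
  move=> y hy; have := h (d *: y).
  rewrite /norm_le -scalerBr normrZ gtr0_norm // => /(_ _) h'.
  apply: (coord_le _ _ _ 0 (h' _)).
  by rewrite mulrC -ler_pdivlMr.
- exists (1 + `|l1val (Rp 0) 0|) => x hx.
  have := hd (d *: x); rewrite /norm_le subr0 normrZ gtr0_norm // => /(_ _) h'.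
  have /(coord_le _ _ _ 0%N) hc : l1_le (l1val (Rp (d *: x) - Rp 0)) 1.
    by apply: h'; rewrite -{2}(mulr1 d) ler_wpM2l // ltW.
  have -> : (l1val (Rp (d *: x)) 0 : K) = (l1val (Rp (d *: x) - Rp 0) 0) + l1val (Rp 0) 0.
    by rewrite /= subrK.
  by apply: (le_trans (ler_normD _ _)); rewrite lerD2r.
- have [x1 hx1] := sR (ev K 0).
  exists (d^-1 *: x1); rewrite scalerA divff ?gt_eqF // scale1r hx1 /=.
  by [].
Qed.
End ESide.

Lemma qconst (K : numFieldType) k (j : nat) (y : l1 K) :
  qf K k (fun _ => j) y = (l1val y j) ^+ k.
Proof. by rewrite /qf prodr_const card_ord. Qed.

Theorem main_gen (K : numFieldType) (E : normedModType K) (m k : nat) :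
  (1 < k)%N ->
  (exists Rp : E -> l1 K,
      is_hpoly (@norm_le _ E) (@l1_norm_le _) (m * k) Rp /\
      (forall y : l1 K, exists x : E, Rp x = y)) ->
  exists T : (l1 K -> K^o) -> (E -> K^o),
    bounded_linear_op (@l1_norm_le _) (@norm_le _ E) k (m * k) T /\
    wstar_wstar_continuous (@l1_norm_le _) (@norm_le _ E) k (m * k) T /\
    (forall P : E -> l1 K,
       is_hpoly (@norm_le _ E) (@l1_norm_le _) m P ->
       exists2 q : l1 K -> K^o,
         is_spoly (@l1_norm_le _) k q & T q <> (fun x => q (P x))).
Proof.
move=> hk [Rp [hR sR]].
have [g [[[Ag [Agml AgE]] gc] [[M hM] [x0 gx0]]]] := gprops _ _ _ _ hR sR.
pose e0 := ev K 0; pose e1 := ev K 1.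
pose T := fun (q : l1 K -> K^o) (x : E) => ((q e0 + q e1) * g x : K^o).
have M0 : 0 <= M.
  by apply: le_trans (normr_ge0 _) (hM 0 _); rewrite /norm_le normr0.
exists T; split; [split; [|split]|split].
- move=> q hq; split.
    exists (fun xs => ((q e0 + q e1) * Ag xs : K^o)); split.
      move=> xs j a u v; rewrite Agml /GRing.scale /=; ring.
    by move=> x; rewrite /T AgE.
  exact: (cont_mul _ _ _ (@norm_mono K E) (fun _ => q e0 + q e1) g (cont_cst _ _ _ _) gc).
- move=> a q1 q2 _ _; apply/funext => x; rewrite /T.
  change (((a * q1 e0 + q2 e0) + (a * q1 e1 + q2 e1)) * g x = a * ((q1 e0 + q1 e1) * g x) + (q2 e0 + q2 e1) * g x); ring.
- exists (2 * M) => q hq c hc y hy.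
  have c0 := hc e0 (delta_le K 0); have c1 := hc e1 (delta_le K 1).
  rewrite /T normrM.
  have -> : 2 * M * c = (c + c) * M by ring.
  apply: ler_pM; [exact: normr_ge0 | exact: normr_ge0 | | exact: hM].
  by apply: le_trans (ler_normD _ _) (lerD c0 c1).
- move=> q0 hq0 lam ys _ e ep.
  exists 2%N, (fun _ n => ((n == 0)%N%:R : K)), (fun l _ => ev K l); split.
    move=> l; exists (fun _ => 1); split; first by move=> n; exact: delta_le.
    exists 1 => N; under eq_bigr do rewrite expr1n mulr1.
    exact: delta_le.
  set S := limn (series (fun n => lam n * g (ys n))).
  have TE q : tensor_eval lam ys (T q) = (q e0 + q e1) * S.
    rewrite /tensor_eval; apply: limn_scale => N.
    rewrite /series /= mulr_sumr; apply: eq_bigr => i _; rewrite /T; ring.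
  have DE q (l : nat) : tensor_eval (fun n => ((n == 0)%N%:R : K)) (fun _ => ev K l) q = q (ev K l).
    exact: limn_delta.
  have S1 : 0 < `|S| + 1 by rewrite ltr_pwDr.
  exists (e / (2 * (`|S| + 1))); first by rewrite divr_gt0 // mulr_gt0.
  move=> q hq hd.
  have h0 := hd (@Ordinal 2 0 isT); have h1 := hd (@Ordinal 2 1 isT).
  rewrite /= !DE in h0 h1.
  rewrite !TE -mulrBl normrM.
  have hc : `|q e0 + q e1 - (q0 e0 + q0 e1)| < 2 * (e / (2 * (`|S| + 1))).
    have -> : q e0 + q e1 - (q0 e0 + q0 e1) = (q e0 - q0 e0) + (q e1 - q0 e1) by ring.
    apply: le_lt_trans (ler_normD _ _) _.
    by rewrite mulr2n mulrDl mul1r ltrD.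
  apply: le_lt_trans (_ : _ <= `|q e0 + q e1 - (q0 e0 + q0 e1)| * (`|S| + 1)) _.
    by rewrite ler_wpM2l // lerDl.
  rewrite -(ltr_pM2r S1) in hc.
  apply: lt_le_trans hc _.
  have -> : 2 * (e / (2 * (`|S| + 1))) * (`|S| + 1) = e.
    by field; rewrite !gt_eqF.
  done.
- move=> P _.
  have k0 : (0 < k)%N by apply: ltn_trans hk.
  pose i0 : 'I_k := Ordinal k0; pose i1 : 'I_k := Ordinal hk.
  pose f3 := fun i : 'I_k => if (val i == 0)%N then 1%N else 0%N.
  have sp f := qf_spoly K k f.
  have [h1|h1] := pselect (T (qf K k (fun _ => 0%N)) = fun x => qf K k (fun _ => 0%N) (P x));
    last by exists (qf K k (fun _ => 0%N)).
  have [h2|h2] := pselect (T (qf K k (fun _ => 1%N)) = fun x => qf K k (fun _ => 1%N) (P x));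
    last by exists (qf K k (fun _ => 1%N)).
  have [h3|h3] := pselect (T (qf K k f3) = fun x => qf K k f3 (P x));
    last by exists (qf K k f3).
  exfalso.
  have kn0 : k != 0%N by rewrite -lt0n.
  have := congr1 (fun F => F x0) h1; rewrite /T /= !qconst /= gx0 expr1n expr0n (negbTE kn0).
  rewrite addr0 mulr1 => /esym y0.
  have := congr1 (fun F => F x0) h2; rewrite /T /= !qconst /= gx0 expr1n expr0n (negbTE kn0).
  rewrite add0r mulr1 => /esym y1.
  have q3e0 : qf K k f3 e0 = 0.
    apply/eqP/prodf_eq0; exists i0 => //.
  have q3e1 : qf K k f3 e1 = 0.
    apply/eqP/prodf_eq0; exists i1 => //.
  have := congr1 (fun F => F x0) h3; rewrite /T /= q3e0 q3e1 addr0 mul0r => /esym/eqP.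
  case/prodf_eq0 => i _; rewrite /f3; case: (val i == 0%N) => /eqP hz.
    by move: y1; rewrite hz expr0n (negbTE kn0) => /eqP; rewrite eq_sym oner_eq0.
  by move: y0; rewrite hz expr0n (negbTE kn0) => /eqP; rewrite eq_sym oner_eq0.
Qed.

Local Close Scope classical_set_scope.
Theorem mainTheorem11 (R : realType) (b : bool)
    (E : completeNormedModType (scalarK R b)) (m k : nat) :
  (1 < k)%N ->
  (exists Rp : E -> l1 (scalarK R b),
      is_hpoly (@norm_le _ E) (@l1_norm_le _) (m * k) Rp /\
      (forall y : l1 (scalarK R b), exists x : E, Rp x = y)) ->
  exists T : (l1 (scalarK R b) -> (scalarK R b)^o) -> (E -> (scalarK R b)^o),
    bounded_linear_op (@l1_norm_le _) (@norm_le _ E) k (m * k) T /\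
    wstar_wstar_continuous (@l1_norm_le _) (@norm_le _ E) k (m * k) T /\
    (forall P : E -> l1 (scalarK R b),
       is_hpoly (@norm_le _ E) (@l1_norm_le _) m P ->
       exists2 q : l1 (scalarK R b) -> (scalarK R b)^o,
         is_spoly (@l1_norm_le _) k q & T q <> (fun x => q (P x))).
Proof. exact: main_gen. Qed.
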